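(* Let $p>155$ be a prime, let $G$ be a cyclic group of order $p$, and let $S$ be an unsplittable minimal zero-sum sequence over $G$ of length $|S|=\frac{p-1}{2}$. Suppose $S=g^{r_1}(t_2g)^{r_2}(t_3g)^{r_3}(t_4g)^{r_4}$ with $g\in G$, nonnegative integers $r_1,\dots,r_4$, and integers $2\le t_2,t_3,t_4\le p-1$, where $r_2+r_3+r_4\le 15$. If $r_i\ge 2$ for some $i\in\{2,3,4\}$, then $t_i\ge\frac{p+3}{2}$.
   Context: A sequence over $G$ is a finite unordered list of elements of $G$ with repetition allowed, written multiplicatively; $h^r$ denotes $r$ copies of $h$ and $tg$ is the $t$-fold multiple of $g$. $|S|$ is the length, $\sigma(S)$ the sum of terms, and $\operatorname{supp}(S)$ the set of distinct elements occurring. $S$ is a minimal zero-sum sequence if $\sigma(S)=0$ and no subsequence $U$ with $1\le|U|<|S|$ has $\sigma(U)=0$. A minimal zero-sum sequence $S$ is unsplittable if there do not exist $h\in\operatorname{supp}(S)$ and $y,z\in G$ with $y+z=h$ such that the sequence obtained from $S$ by replacing one copy of $h$ with the two terms $y,z$ is again a minimal zero-sum sequence. *)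

(* Defs.v *)
From mathcomp Require Import all_boot all_algebra.
Set Implicit Arguments. Unset Strict Implicit. Unset Printing Implicit Defensive.
Import GRing.Theory.

(* Sequences over an additive abelian group G (a zmodType) are represented by
   lists [seq G], considered up to permutation (unordered lists).
   Subsequences U of S (sub-multisets) are exactly the lists [mask m S]. *)

Definition sigma (G : zmodType) (S : seq G) : G := (\sum_(x <- S) x)%R.

Definition minimal_zero_sum (G : zmodType) (S : seq G) : Prop :=
  sigma S = 0%R /\
  forall m : bitseq, 1 <= size (mask m S) < size S -> sigma (mask m S) <> 0%R.

Definition unsplittable (G : zmodType) (S : seq G) : Prop :=
  minimal_zero_sum S /\
  ~ (exists h y z : G, [/\ h \in S, (y + z)%R = h &
                          minimal_zero_sum (y :: z :: rem h S)]).

(* Main.v *)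
Require Import Defs.
From mathcomp Require Import all_boot all_algebra.
From mathcomp Require Import zify.
Import GRing.Theory.
Set Implicit Arguments. Unset Strict Implicit.

Definition subm (T : eqType) (U S : seq T) := forall x, count_mem x U <= count_mem x S.

Lemma subm_mask (T : eqType) (S U : seq T) : subm U S -> exists m, perm_eq U (mask m S).
Proof.
elim: S U => [|x S IH] U H.
  case: U H => [|a U] H; first by exists [::].
  by have := H a; rewrite /= eqxx.
case: (boolP (x \in U)) => xU.
  have H' : subm (rem x U) S.
    move=> y; have := H y; rewrite (permP (perm_to_rem xU)) /=; lia.
  have [m Hm] := IH _ H'; exists (true :: m) => /=.
  by apply: perm_trans (perm_to_rem xU) _; rewrite perm_cons.
have H' : subm U S.
  move=> y; have := H y; rewrite /=; case: (eqVneq x y) => [<-|_] /=.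
    by rewrite (count_memPn xU).
  by rewrite add0n.
by have [m Hm] := IH _ H'; exists (false :: m).
Qed.

Lemma compl (T : eqType) (s : seq T) m : exists m2, perm_eq s (mask m s ++ mask m2 s).
Proof.
elim: s m => [|x s IH] m; first by exists [::]; case: m.
case: m => [|b m]; first by exists (nseq (size s).+1 true); rewrite /= mask_true.
have [m2 H] := IH m; case: b => /=.
  by exists (false :: m2); rewrite perm_cons.
exists (true :: m2) => /=.
apply: perm_trans (_ : perm_eq _ (x :: (mask m s ++ mask m2 s))) _; first by rewrite perm_cons.
by rewrite perm_sym -(cat1s x (mask m2 s)) perm_catCA.
Qed.

Lemma sigma_perm (G : zmodType) (s1 s2 : seq G) : perm_eq s1 s2 -> sigma s1 = sigma s2.
Proof. by move=> H; rewrite /sigma (perm_big _ H). Qed.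

Lemma sigma_cat (G : zmodType) (s1 s2 : seq G) : sigma (s1 ++ s2) = (sigma s1 + sigma s2)%R.
Proof. by rewrite /sigma big_cat. Qed.

Lemma sigma_cons (G : zmodType) x (s : seq G) : sigma (x :: s) = (x + sigma s)%R.
Proof. by rewrite /sigma big_cons. Qed.

Lemma mzs_sub (G : zmodType) (S U : seq G) : minimal_zero_sum S -> subm U S ->
  0 < size U < size S -> sigma U <> 0%R.
Proof.
move=> [_ H] /subm_mask [m Hm]; rewrite (perm_size Hm) (sigma_perm Hm); exact: H.
Qed.

Lemma mzs_of (G : zmodType) (S : seq G) : sigma S = 0%R ->
  (forall U V, (forall x, count_mem x U + count_mem x V = count_mem x S) ->
     size U + size V = size S -> sigma U = 0%R -> sigma V = 0%R ->
     0 < size U -> 0 < size V -> False) -> minimal_zero_sum S.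
Proof.
move=> H0 H; split => // m /andP[h1 h2] hs.
have [m2 Hm] := compl S m.
apply: (H (mask m S) (mask m2 S)).
- by move=> x; rewrite -count_cat -(permP Hm).
- by rewrite -size_cat -(perm_size Hm).
- by [].
- by move: H0; rewrite (sigma_perm Hm) sigma_cat hs add0r.
- by [].
- by move: h2; rewrite (perm_size Hm) size_cat -{1}(addn0 (size (mask m S))) ltn_add2l.
Qed.

Lemma exc (G : zmodType) (S W : seq G) : minimal_zero_sum S -> sigma W = 0%R ->
  0 < size W < size S -> exists x, count_mem x S < count_mem x W.
Proof.
move=> HS HW Hs.
case: (boolP (all (fun x => count_mem x W <= count_mem x S) W)) => Ha.
  exfalso; apply: (mzs_sub HS _ Hs HW) => x.
  case: (boolP (x \in W)) => xW; first by move/allP: Ha => /(_ x xW).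
  by move/count_memPn: xW => ->.
move/allPn: Ha => [x _]; rewrite -ltnNge => ?; by exists x.
Qed.

Lemma no_zero (G : zmodType) (S : seq G) : minimal_zero_sum S -> 1 < size S -> count_mem 0%R S = 0.
Proof.
move=> HS Hs; apply/count_memPn/negP => H0.
apply: (mzs_sub HS (U := [:: 0%R])) => //.
  move=> x /=; case: (eqVneq 0%R x) => [<-|] //=; rewrite addn0 lt0n; apply/eqP => /count_memPn; by rewrite H0.
by rewrite sigma_cons /sigma big_nil addr0.
Qed.

Ltac gen_nat :=
  repeat match goal with
  | |- context [count ?P ?s] => let c := fresh "c" in set c := count P s in *
  | H : context [count ?P ?s] |- _ => let c := fresh "c" in set c := count P s in *
  | |- context [size ?s] => let c := fresh "c" in set c := size s in *
  | H : context [size ?s] |- _ => let c := fresh "c" in set c := size s in *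
  end.
Ltac clear_props := repeat match goal with H : ?T |- _ => lazymatch type of T with Prop => clear H end end.
Ltac genb := repeat match goal with |- context [nat_of_bool ?b] => have := leq_b1 b; generalize (nat_of_bool b); intro end.
Ltac flia := clear_props; lia.

Lemma count2 (T : eqType) (a b x : T) s :
  count_mem x (a :: b :: s) = (a == x) + (b == x) + count_mem x s.
Proof. by rewrite /= addnA. Qed.

Lemma sigma_nseq (G : zmodType) n (x : G) : sigma (nseq n x) = (x *+ n)%R.
Proof. elim: n => [|n IH]; first by rewrite /sigma big_nil. by rewrite /= sigma_cons IH mulrS. Qed.

Lemma small (G : zmodType) (S' W W' : seq G) : count_mem 0%R S' = 0 ->
  (forall x, count_mem x W + count_mem x W' = count_mem x S') -> sigma W' = 0%R ->
  size W' = 1 -> False.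
Proof.
move=> h0 hc; case: W' hc => [|v [|]] //= hc; rewrite sigma_cons /sigma big_nil addr0 => v0 _.
by have := hc 0%R; rewrite h0 v0 eqxx; lia.
Qed.

Lemma caseC (G : zmodType) (S : seq G) g h : minimal_zero_sum S -> 1 < size S ->
  g \in S -> h \in S -> h != g -> (h + h = g)%R -> minimal_zero_sum (h :: h :: rem g S).
Proof.
move=> HS Hs gS hS hg hhg.
have Hp := perm_to_rem gS.
have cS x : count_mem x S = (g == x) + count_mem x (rem g S) by rewrite (permP Hp).
have z0 := no_zero HS Hs.
have h0 : (h == 0%R) = false.
  apply/negbTE/eqP => e; move: hS; rewrite e => /count_memPn; by rewrite z0.
have cS' : count_mem 0%R (h :: h :: rem g S) = 0.
  by rewrite /= h0 /= !add0n; move: (cS 0%R); rewrite z0; move=> /eqP; rewrite eq_sym addn_eq0 => /andP[_ /eqP ->].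
apply: mzs_of.
  by rewrite !sigma_cons addrA hhg -sigma_cons -(sigma_perm Hp); case: HS.
move=> U V cUV sUV sU sV pU pV.
have sR : size (rem g S) = (size S).-1 by rewrite size_rem.
move: sUV; rewrite /= sR prednK ?(ltnW Hs) // => sUV.
have hU : size U <> 1 by apply: (small cS' (W := V) (W' := U)) => // x; rewrite addnC.
have hV : size V <> 1 by exact: (small cS' cUV).
set a := size U in pU sUV hU *; set b := size V in pV sUV hV *; set c := size S in sUV Hs *.
have hsU : 0 < size U < size S.
  by apply/andP; split; lia.
have [xu Hu] := exc HS sU hsU.
have hsV : 0 < size V < size S by apply/andP; split; lia.
have [xv Hv] := exc HS sV hsV.
have cgt : 0 < count_mem h S by rewrite lt0n; apply/eqP/count_memPn; rewrite hS.
have gh : (g == h) = false by rewrite eq_sym (negbTE hg).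
move: Hu Hv cgt (cUV xu) (cUV xv) (cS xu) (cS xv) (cS h) (cUV h); rewrite !count2 gh eqxx.
case: (eqVneq h xu) => [<-|nu]; case: (eqVneq h xv) => [<-|nv];
  rewrite ?eqxx ?gh ?(negbTE nu) ?(negbTE nv); flia.
Qed.

Lemma caseA (G : zmodType) (S : seq G) g h z k : minimal_zero_sum S -> 1 < size S ->
  g \in S -> h \in S -> h != g -> z != h -> z != 0%R -> z = (g *+ k)%R -> (g + z = h)%R ->
  0 < k <= count_mem g S -> minimal_zero_sum (g :: z :: rem h S).
Proof.
move=> HS Hs gS hS hg zh zn0 zdef gzh /andP[k0 kc].
have Hp := perm_to_rem hS.
have cS x : count_mem x S = (h == x) + count_mem x (rem h S) by rewrite (permP Hp).
have z0 := no_zero HS Hs.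
have g0 : (g == 0%R) = false.
  apply/negbTE/eqP => e; move: gS; rewrite e => /count_memPn; by rewrite z0.
have cS' : count_mem 0%R (g :: z :: rem h S) = 0.
  rewrite count2 g0 (negbTE zn0) !add0n; move: (cS 0%R); rewrite z0.
  by move=> /eqP; rewrite eq_sym addn_eq0 => /andP[_ /eqP ->].
have hg' : (h == g) = false by apply/negbTE.
have cg : 0 < count_mem g S by rewrite lt0n; apply/eqP/count_memPn; rewrite gS.
have key : forall W W', (forall x, count_mem x W + count_mem x W' = count_mem x (g :: z :: rem h S)) ->
    size W + size W' = (size S).+1 -> sigma W' = 0%R ->
    count_mem g S < count_mem g W -> count_mem z S < count_mem z W' -> z != g -> False.
  move=> W W' cWW sWW sW' Hg Hz zng.
  have zW' : z \in W'.
    by apply/negPn/negP => /count_memPn e; move: Hz; rewrite e.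
  have Hp' := perm_to_rem zW'.
  have cW' x : count_mem x W' = (z == x) + count_mem x (rem z W') by rewrite (permP Hp').
  have W'g : count_mem g W' = 0.
    move: (cWW g) (cS g) Hg; rewrite count2 eqxx hg' (negbTE zng); flia.
  apply: (mzs_sub HS (U := rem z W' ++ nseq k g)).
  - move=> x; move: (cW' x) (cWW x) (cS x) W'g kc (cW' g); rewrite count2 count_cat count_nseq /=.
    case: (eqVneq g x) => [<-|ngx]; rewrite ?eqxx ?(negbTE ngx) /=; rewrite ?(negbTE zng) ?hg' ?mul1n ?mul0n ?add0n; flia.
  - move: (count_size (pred1 g) W) sWW Hg k0 kc; rewrite size_cat size_nseq size_rem //.
    have : 0 < size W' by case: (W') zW'.
    rewrite -subn1 => A B C D E F; apply/andP; split; move: A B C D E F; flia.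
  - rewrite sigma_cat sigma_nseq -zdef.
    by move: sW'; rewrite (sigma_perm Hp') sigma_cons addrC.
apply: mzs_of.
  by rewrite !sigma_cons addrA gzh -sigma_cons -(sigma_perm Hp); case: HS.
move=> U V cUV sUV sU sV pU pV.
have sR : size (rem h S) = (size S).-1 by rewrite size_rem.
move: sUV; rewrite /= sR prednK ?(ltnW Hs) // => sUV.
have hU : size U <> 1 by apply: (small cS' (W := V) (W' := U)) => // x; rewrite addnC.
have hV : size V <> 1 by exact: (small cS' cUV).
have hsU : 0 < size U < size S.
  set a := size U in pU sUV hU *; set b := size V in pV sUV hV *; set c := size S in sUV Hs *.
  by apply/andP; split; lia.
have hsV : 0 < size V < size S.
  set a := size U in pU sUV hU *; set b := size V in pV sUV hV *; set c := size S in sUV Hs *.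
  by apply/andP; split; lia.
have [xu Hu] := exc HS sU hsU.
have [xv Hv] := exc HS sV hsV.
have loc : forall W x, count_mem x S < count_mem x W ->
    count_mem x W <= count_mem x (g :: z :: rem h S) -> x = g \/ x = z.
  move=> W x H1 H2; move: H1 H2 (cS x); rewrite count2.
  case: (eqVneq g x) => [->|nx]; first by left.
  case: (eqVneq z x) => [->|nz]; first by right.
  flia.
have Hxu : xu = g \/ xu = z by apply: (loc U) => //; rewrite -cUV leq_addr.
have Hxv : xv = g \/ xv = z by apply: (loc V) => //; rewrite -cUV leq_addl.
have zh' : (h == z) = false by rewrite eq_sym; apply/negbTE.
case: (eqVneq z g) => [zg | zng].
  have : xu = g /\ xv = g by case: Hxu; case: Hxv; rewrite ?zg.
  case=> ??; subst xu xv.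
  move: Hu Hv (cUV g) (cS g) cg; rewrite count2 eqxx zg eqxx hg'; flia.
case: Hxu => ?; case: Hxv => ?; subst xu xv.
- move: Hu Hv (cUV g) (cS g) cg; rewrite count2 eqxx (negbTE zng) hg'; flia.
- exact: (key U V cUV sUV sV Hu Hv zng).
- apply: (key V U) => //; first by move=> x; rewrite addnC.
  by rewrite addnC.
- move: Hu Hv (cUV z) (cS z) cg; rewrite count2 eqxx eq_sym (negbTE zng) zh'; flia.
Qed.

Lemma zp_eq0 (p : nat) (pp : prime p) (g : 'Z_p) k : g != 0%R -> ((g *+ k)%R == 0%R) = (p %| k).
Proof.
move=> g0.
have p1 := prime_gt1 pp.
have ge : g = ((val g)%:R : 'Z_p)%R by rewrite natr_Zp.
have gk : (g *+ k)%R = ((val g * k)%:R : 'Z_p)%R by rewrite natrM -ge mulr_natr.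
rewrite gk.
have vg : val g < p by have := ltn_ord g; rewrite [X in _ < X -> _]Zp_cast.
have vg0 : 0 < val g by rewrite lt0n; apply: contra g0 => /eqP e; apply/eqP/val_inj.
apply/eqP/idP => [e|d].
  have := val_Zp_nat p1 (val g * k); rewrite e /= => /esym/eqP.
  rewrite -/(dvdn _ _) Euclid_dvdM // => /orP[|//].
  by move/(dvdn_leq vg0); rewrite leqNgt vg.
by apply: val_inj; rewrite /= val_Zp_nat //; apply/eqP; rewrite -/(dvdn p _) dvdn_mull.
Qed.

Lemma one (p : nat) (pp : prime p) (hp : 155 < p) (S : seq 'Z_p) (g : 'Z_p) t :
  unsplittable S -> size S = (p - 1) %/ 2 -> size S <= count_mem g S + 15 ->
  2 <= t <= p - 1 -> 2 <= count_mem (g *+ t)%R S -> (p + 3) %/ 2 <= t.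
Proof.
move=> [HS nsp] sz szc /andP[t2 tp] c2.
have op : odd p by case: (even_prime pp) => // e; move: hp; rewrite e.
have hp2 : (p - 1) %/ 2 * 2 + 1 = p.
  by have := odd_double_half p; rewrite op -muln2; lia.
have Hs : 1 < size S by lia.
have cgS : 60 < count_mem g S by lia.
have gS : g \in S by rewrite -has_pred1 has_count; lia.
have z0 := no_zero HS Hs.
have g0 : g != 0%R by apply: contraTneq gS => ->; apply/count_memPn.
have hS : (g *+ t)%R \in S by rewrite -has_pred1 has_count; lia.
have tt : t = (t - 1).+1 by lia.
have hE : (g *+ t = g + g *+ (t - 1))%R by rewrite {1}tt mulrS.
have hg : (g *+ t)%R != g.
  apply/negP => /eqP e; move: e; rewrite hE => e.
  have : (g *+ (t - 1) == 0)%R by apply/eqP; rewrite -(addKr g (g *+ (t - 1))%R) e addNr.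
  by rewrite zp_eq0 // => /dvdn_leq; lia.
rewrite leqNgt; apply/negP => tlt.
case: (leqP t (count_mem g S).+1) => ta.
  apply: nsp; exists (g *+ t)%R, g, (g *+ (t - 1))%R; split; [done | by rewrite hE |].
  apply: (caseA (k := t - 1)) => //.
  - apply/negP => /eqP e; move: e; rewrite hE => e.
    have := congr1 (fun x => x - g *+ (t - 1))%R e; rewrite subrr addrK => e'.
    by move: g0; rewrite -e' eqxx.
  - by rewrite zp_eq0 //; apply/negP => /dvdn_leq; lia.
  - by apply/andP; split; [rewrite subn_gt0 | rewrite leq_subLR add1n].
have gh : (g == g *+ t)%R = false by rewrite eq_sym; apply/negbTE.
have hg' : (g *+ t == g)%R = false by apply/negbTE.
case: (ltnP (t + t) p) => tb.
  apply: (mzs_sub HS (U := (g *+ t)%R :: (g *+ t)%R :: nseq (p - (t + t)) g)).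
  - move=> x; rewrite count2 count_nseq /=.
    case: (eqVneq (g *+ t)%R x) => [<-|nh]; first by rewrite ?gh mul0n addn0.
    case: (eqVneq g x) => [<-|ng] /=; first (rewrite !add0n mul1n; move: ta szc sz tb hp2 hp; set c := count_mem g S; set s := size S; lia).
    by [].
  - rewrite /= size_nseq; move: ta szc sz tb hp2 hp; set c := count_mem g S; set s := size S; lia.
  - rewrite !sigma_cons sigma_nseq -!mulrnDr.
    have -> : t + (t + (p - (t + t))) = p by lia.
    by apply/eqP; rewrite zp_eq0.
have tp1 : t + t = p.+1 by lia.
apply: nsp; exists g, (g *+ t)%R, (g *+ t)%R; split => //.
  rewrite -mulrnDr tp1 mulrS.
  have /eqP -> : (g *+ p == 0)%R by rewrite zp_eq0.
  by rewrite addr0.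
apply: caseC => //.
rewrite -mulrnDr tp1 mulrS.
have /eqP -> : (g *+ p == 0)%R by rewrite zp_eq0.
by rewrite addr0.
Qed.

Unset Implicit Arguments.

Theorem lemma3p2 (p : nat) (pp : prime p) (hp : 155 < p) (S : seq 'Z_p)
    (g : 'Z_p) (r1 r2 r3 r4 t2 t3 t4 : nat) :
  unsplittable S ->
  size S = (p - 1) %/ 2 ->
  perm_eq S (nseq r1 g ++ nseq r2 (g *+ t2)%R ++ nseq r3 (g *+ t3)%R
             ++ nseq r4 (g *+ t4)%R) ->
  2 <= t2 <= p - 1 -> 2 <= t3 <= p - 1 -> 2 <= t4 <= p - 1 ->
  r2 + r3 + r4 <= 15 ->
  [/\ 2 <= r2 -> (p + 3) %/ 2 <= t2,
      2 <= r3 -> (p + 3) %/ 2 <= t3 &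
      2 <= r4 -> (p + 3) %/ 2 <= t4].
Proof.
move=> US sz Hperm ht2 ht3 ht4 hr.
have sizeS : size S = r1 + (r2 + (r3 + r4)) by rewrite (perm_size Hperm) !size_cat !size_nseq.
have cnt := permP Hperm.
have cg : r1 <= count_mem g S.
  by rewrite cnt !count_cat !count_nseq /= eqxx mul1n leq_addr.
have szc : size S <= count_mem g S + 15.
  by move: cg sizeS hr; set c := count_mem g S; set s := size S; lia.
split => hri; apply: (one pp hp US sz szc) => //.
- rewrite cnt !count_cat !count_nseq /= eqxx mul1n.
  by move: hri; set a := (_ * r1); set b := (_ * r3); set c := (_ * r4); lia.
- rewrite cnt !count_cat !count_nseq /= eqxx mul1n.
  by move: hri; set a := (_ * r1); set b := (_ * r2); set c := (_ * r4); lia.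
- rewrite cnt !count_cat !count_nseq /= eqxx mul1n.
  by move: hri; set a := (_ * r1); set b := (_ * r2); set c := (_ * r3); lia.
Qed.
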